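(* Let $\widehat{G}$ be a signed bigraph whose underlying bigraph is non-separable, with bipartition $(X,Y)$ and no isolated vertices, and let $x_1,\dots,x_\alpha,y_1,\dots,y_\beta$ be a canonical ordering of $\widehat{G}$. Suppose that there are distinct $x_i,x_j,x_k\in X$ and distinct $y_\ell,y_r\in Y$ with $x_i,x_j\in N(y_1)$ such that, in the subgraph induced by $\{x_i,x_j,x_k,y_\ell,y_r\}$, the edges are exactly $x_iy_\ell,x_jy_\ell,x_iy_r,x_jy_r,x_ky_r$ (so $x_ky_\ell$ is not an edge), where $x_iy_r$ and $x_jy_r$ are negative (the other three of any sign). If no edge of $\widehat{G}$ is signed simplicial, then $\widehat{G}$ contains a graph in $F_2\cup F_3\cup F_4\cup F_5$ as an induced subgraph, where: $F_2$: complete bigraph with parts $\{a_1,a_2\}$, $\{b_1,b_2,b_3\}$, $a_1b_1,a_1b_2,a_2b_2,a_2b_3$ negative, $a_1b_3,a_2b_1$ free; $F_3$: complete bigraph with parts $\{a_1,a_2\}$, $\{b_1,\dots,b_4\}$, $a_1b_1,a_1b_2,a_2b_3,a_2b_4$ negative, other four edges free; $F_4$: complete bigraph with parts $\{a_1,a_2,a_3\}$, $\{b_1,b_2,b_3\}$, $a_1b_1,a_2b_2,a_3b_3$ negative, other six edges free; $F_5$: bigraph with parts $\{a_1,a_2,a_3\}$, $\{b_1,b_2,b_3\}$ having all nine possible edges except $a_1b_3$, with $a_2b_1,a_3b_2$ negative and the other six edges free.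
   Context: A signed graph is a finite simple graph each of whose edges is assigned a sign, positive or negative. A signed bigraph is a signed graph whose underlying graph is bipartite. A bigraph is non-separable if it contains no induced $2K_2$. An induced subgraph is obtained by deleting vertices only; $\widehat G$ contains $H$ as an induced subgraph if some induced subgraph is isomorphic to $H$ via a sign-preserving isomorphism. In a bigraph with bipartition $(X,Y)$, a subgraph $H$ is a biclique if every vertex of $V(H)\cap X$ is adjacent to every vertex of $V(H)\cap Y$. For an edge $uv$, $N(uv)=(N(u)\cup N(v))\setminus\{u,v\}$; $uv$ is signed simplicial if $N(uv)$ induces a biclique all of whose edges are positive. A canonical ordering of a non-separable bigraph with $X=\{x_1,\dots,x_\alpha\}$, $Y=\{y_1,\dots,y_\beta\}$ is an ordering with $N(x_1)\supseteq\cdots\supseteq N(x_\alpha)$ and $N(y_1)\subseteq\cdots\subseteq N(y_\beta)$. A family described by a graph with some edges declared negative and the rest declared free is the set of all signed graphs obtained by giving each free edge an arbitrary sign. *)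

(* Defs.v *)
From mathcomp Require Import all_boot.
Set Implicit Arguments. Unset Strict Implicit. Unset Printing Implicit Defensive.

Record sgraph (V : finType) := SGraph { sadj : rel V; sneg : rel V }.

Definition is_sgraph (V : finType) (G : sgraph V) : Prop :=
  symmetric (sadj G) /\ irreflexive (sadj G) /\
  (forall u v, sadj G u v -> sneg G u v = sneg G v u).

Definition Nbhd (V : finType) (G : sgraph V) (v : V) : {set V} :=
  [set u | sadj G v u].

Definition bipartition (V : finType) (G : sgraph V) (X : {set V}) : Prop :=
  forall u v, sadj G u v -> (u \in X) != (v \in X).

Definition no_isolated (V : finType) (G : sgraph V) : Prop :=
  forall v, exists u, sadj G v u.

(* contains no induced 2K2 *)
Definition nonseparable (V : finType) (G : sgraph V) : Prop :=
  ~ exists a b c d : V,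
      [/\ uniq [:: a; b; c; d], sadj G a b, sadj G c d &
          ~~ (sadj G a c || sadj G a d || sadj G b c || sadj G b d)].

(* canonical ordering x_1..x_alpha (= xs) of X and y_1..y_beta (= ys) of Y = ~: X *)
Definition canonical_ordering (V : finType) (G : sgraph V) (X : {set V})
    (xs ys : seq V) : Prop :=
  [/\ uniq xs /\ (forall v, (v \in xs) = (v \in X)),
      uniq ys /\ (forall v, (v \in ys) = (v \in ~: X)),
      sorted (fun u w => Nbhd G w \subset Nbhd G u) xs &
      sorted (fun u w => Nbhd G u \subset Nbhd G w) ys].

Definition Nedge (V : finType) (G : sgraph V) (u v : V) : {set V} :=
  (Nbhd G u :|: Nbhd G v) :\: [set u; v].

Definition positive_biclique (V : finType) (G : sgraph V) (X : {set V})
    (S : {set V}) : Prop :=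
  (forall a b, a \in S -> b \in S -> a \in X -> b \notin X -> sadj G a b) /\
  (forall a b, a \in S -> b \in S -> sadj G a b -> ~~ sneg G a b).

Definition signed_simplicial (V : finType) (G : sgraph V) (X : {set V})
    (u v : V) : Prop :=
  sadj G u v /\ positive_biclique G X (Nedge G u v).

Definition contains_induced (V W : finType) (G : sgraph V) (H : sgraph W) : Prop :=
  exists f : W -> V,
    [/\ injective f,
        (forall a b, sadj G (f a) (f b) = sadj H a b) &
        (forall a b, sadj H a b -> sneg G (f a) (f b) = sneg H a b)].

(* Family described by a graph adjF with negative edges negF, all other edges free *)
Definition in_family (n : nat) (adjF negF : rel 'I_n) (H : sgraph 'I_n) : Prop :=
  [/\ is_sgraph H, sadj H =2 adjF &
      (forall a b, adjF a b -> negF a b -> sneg H a b)].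

Definition pair_in (n : nat) (s : seq (nat * nat)) (i j : 'I_n) : bool :=
  (((i : nat), (j : nat)) \in s) || (((j : nat), (i : nat)) \in s).

(* F2: a1,a2 = 0,1 ; b1,b2,b3 = 2,3,4 *)
Definition adjF2 : rel 'I_5 := fun i j => (i < 2) != (j < 2).
Definition negF2 : rel 'I_5 := pair_in [:: (0,2); (0,3); (1,3); (1,4)].
(* F3: a1,a2 = 0,1 ; b1..b4 = 2..5 *)
Definition adjF3 : rel 'I_6 := fun i j => (i < 2) != (j < 2).
Definition negF3 : rel 'I_6 := pair_in [:: (0,2); (0,3); (1,4); (1,5)].
(* F4: a1,a2,a3 = 0,1,2 ; b1,b2,b3 = 3,4,5 *)
Definition adjF4 : rel 'I_6 := fun i j => (i < 3) != (j < 3).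
Definition negF4 : rel 'I_6 := pair_in [:: (0,3); (1,4); (2,5)].
(* F5: same parts, all edges except a1b3 = (0,5) *)
Definition adjF5 : rel 'I_6 :=
  fun i j => ((i < 3) != (j < 3)) && ~~ pair_in [:: (0,5)] i j.
Definition negF5 : rel 'I_6 := pair_in [:: (1,3); (2,4)].

(* Main.v *)
Require Import Defs.
From mathcomp Require Import all_boot.
From Stdlib Require Import Classical.
Set Implicit Arguments. Unset Strict Implicit. Unset Printing Implicit Defensive.

Section Aux.
Variables (T : finType) (G : sgraph T) (X : {set T}).
Hypothesis HG : is_sgraph G.
Hypothesis HB : bipartition G X.

Lemma sadjC u v : sadj G u v = sadj G v u.
Proof. by case: HG => H _; rewrite H. Qed.

Lemma nadjX u v : u \in X -> v \in X -> sadj G u v = false.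
Proof. move=> hu hv; apply/negbTE/negP=> /HB; by rewrite hu hv. Qed.

Lemma nadjY u v : u \notin X -> v \notin X -> sadj G u v = false.
Proof. move=> /negbTE hu /negbTE hv; apply/negbTE/negP=> /HB; by rewrite hu hv. Qed.

Lemma fam_of n (adjF negF : rel 'I_n) (f : 'I_n -> T) :
  injective f ->
  (forall a b, sadj G (f a) (f b) = adjF a b) ->
  (forall a b, adjF a b -> negF a b -> sneg G (f a) (f b)) ->
  exists H, in_family adjF negF H /\ contains_induced G H.
Proof.
case: HG => [Hs [Hi Hn]] finj Hadj Hneg.
exists (SGraph adjF (fun a b => sneg G (f a) (f b))); split; last first.
  by exists f; split=> //.
split=> //; rewrite /is_sgraph /=; split; first by move=> a b; rewrite -!Hadj Hs.
split; first by move=> a; rewrite -Hadj Hi.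
by move=> a b; rewrite -Hadj => H; exact: Hn.
Qed.

Lemma nth_inj (s : seq T) x0 n : size s = n -> uniq s ->
  injective (fun i : 'I_n => nth x0 s i).
Proof.
move=> hs hu i j /eqP; rewrite nth_uniq ?hs // => /eqP; exact: val_inj.
Qed.

End Aux.

Ltac close_adj G X :=
  match goal with
  | |- sadj G ?p ?q = _ =>
     first [ by rewrite (@nadjX _ G X)
           | by rewrite (@nadjY _ G X)
           | match goal with H : is_true (sadj G p q) |- _ => by rewrite H end
           | match goal with H : is_true (sadj G q p) |- _ => by rewrite sadjC // H end
           | match goal with H : is_true (~~ sadj G p q) |- _ => by rewrite (negbTE H) end
           | match goal with H : is_true (~~ sadj G q p) |- _ => by rewrite sadjC // (negbTE H) end ]
  end.

Ltac close_neg G HG :=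
  match goal with
  | |- is_true (sneg G ?p ?q) =>
     first [ assumption
           | match goal with H : is_true (sneg G q p) |- _ =>
               let Hn := fresh in
               case: (HG) => _ [_ Hn]; rewrite Hn; [assumption | first [assumption | by rewrite sadjC]] end ]
  end.

Lemma getF4 (T : finType) (G : sgraph T) (X : {set T}) a1 a2 a3 b1 b2 b3 :
  is_sgraph G -> bipartition G X ->
  a1 \in X -> a2 \in X -> a3 \in X -> b1 \notin X -> b2 \notin X -> b3 \notin X ->
  uniq [:: a1; a2; a3] -> uniq [:: b1; b2; b3] ->
  sadj G a1 b1 -> sadj G a1 b2 -> sadj G a1 b3 ->
  sadj G a2 b1 -> sadj G a2 b2 -> sadj G a2 b3 ->
  sadj G a3 b1 -> sadj G a3 b2 -> sadj G a3 b3 ->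
  sneg G a1 b1 -> sneg G a2 b2 -> sneg G a3 b3 ->
  exists H : sgraph 'I_6, in_family adjF4 negF4 H /\ contains_induced G H.
Proof.
move=> HG HB ha1 ha2 ha3 hb1 hb2 hb3 ua ub *.
have ne : forall u v, u \notin X -> v \in X -> (u == v) = false.
  by move=> u v hu hv; apply/negbTE/eqP=> e; move: hu; rewrite e hv.
apply: (@fam_of _ G HG _ _ _ (fun i : 'I_6 => nth a1 [:: a1; a2; a3; b1; b2; b3] i)).
- apply: nth_inj => //.
  rewrite (cat_uniq [:: a1; a2; a3] [:: b1; b2; b3]) ua ub /= !inE.
  by rewrite !ne.
- move=> [[|[|[|[|[|[|i]]]]]] Hi] [[|[|[|[|[|[|j]]]]]] Hj] //=; close_adj G X.
- move=> [[|[|[|[|[|[|i]]]]]] Hi] [[|[|[|[|[|[|j]]]]]] Hj] //= _; 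
  rewrite /negF4 /pair_in /= ?inE //= => _; close_neg G HG.
Qed.

Lemma getF3 (T : finType) (G : sgraph T) (X : {set T}) a1 a2 b1 b2 b3 b4 :
  is_sgraph G -> bipartition G X ->
  a1 \in X -> a2 \in X -> b1 \notin X -> b2 \notin X -> b3 \notin X -> b4 \notin X ->
  a1 != a2 -> uniq [:: b1; b2; b3; b4] ->
  sadj G a1 b1 -> sadj G a1 b2 -> sadj G a1 b3 -> sadj G a1 b4 ->
  sadj G a2 b1 -> sadj G a2 b2 -> sadj G a2 b3 -> sadj G a2 b4 ->
  sneg G a1 b1 -> sneg G a1 b2 -> sneg G a2 b3 -> sneg G a2 b4 ->
  exists H : sgraph 'I_6, in_family adjF3 negF3 H /\ contains_induced G H.
Proof.
move=> HG HB ha1 ha2 hb1 hb2 hb3 hb4 ua ub *.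
have ne : forall u v, u \notin X -> v \in X -> (u == v) = false.
  by move=> u v hu hv; apply/negbTE/eqP=> e; move: hu; rewrite e hv.
apply: (@fam_of _ G HG _ _ _ (fun i : 'I_6 => nth a1 [:: a1; a2; b1; b2; b3; b4] i)).
- apply: nth_inj => //.
  rewrite (cat_uniq [:: a1; a2] [:: b1; b2; b3; b4]) ub /= !inE ua.
  by rewrite !ne.
- move=> [[|[|[|[|[|[|i]]]]]] Hi] [[|[|[|[|[|[|j]]]]]] Hj] //=; close_adj G X.
- move=> [[|[|[|[|[|[|i]]]]]] Hi] [[|[|[|[|[|[|j]]]]]] Hj] //= _; 
  rewrite /negF3 /pair_in /= ?inE //= => _; close_neg G HG.
Qed.

Lemma getF5 (T : finType) (G : sgraph T) (X : {set T}) a1 a2 a3 b1 b2 b3 :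
  is_sgraph G -> bipartition G X ->
  a1 \in X -> a2 \in X -> a3 \in X -> b1 \notin X -> b2 \notin X -> b3 \notin X ->
  uniq [:: a1; a2; a3] -> uniq [:: b1; b2; b3] ->
  sadj G a1 b1 -> sadj G a1 b2 -> ~~ sadj G a1 b3 ->
  sadj G a2 b1 -> sadj G a2 b2 -> sadj G a2 b3 ->
  sadj G a3 b1 -> sadj G a3 b2 -> sadj G a3 b3 ->
  sneg G a2 b1 -> sneg G a3 b2 ->
  exists H : sgraph 'I_6, in_family adjF5 negF5 H /\ contains_induced G H.
Proof.
move=> HG HB ha1 ha2 ha3 hb1 hb2 hb3 ua ub *.
have ne : forall u v, u \notin X -> v \in X -> (u == v) = false.
  by move=> u v hu hv; apply/negbTE/eqP=> e; move: hu; rewrite e hv.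
apply: (@fam_of _ G HG _ _ _ (fun i : 'I_6 => nth a1 [:: a1; a2; a3; b1; b2; b3] i)).
- apply: nth_inj => //.
  rewrite (cat_uniq [:: a1; a2; a3] [:: b1; b2; b3]) ua ub /= !inE.
  by rewrite !ne.
- move=> [[|[|[|[|[|[|i]]]]]] Hi] [[|[|[|[|[|[|j]]]]]] Hj] //=; close_adj G X.
- move=> [[|[|[|[|[|[|i]]]]]] Hi] [[|[|[|[|[|[|j]]]]]] Hj] //= _; 
  rewrite /negF5 /pair_in /= ?inE //= => _; close_neg G HG.
Qed.

Lemma bipC (T : finType) (G : sgraph T) (X : {set T}) :
  bipartition G X -> bipartition G (~: X).
Proof. by move=> HB u v /HB; rewrite !inE; case: (u \in X); case: (v \in X). Qed.

Section Core.
Variables (T : finType) (G : sgraph T) (X : {set T}).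
Hypothesis HG : is_sgraph G.
Hypothesis HB : bipartition G X.
Hypothesis HN : nonseparable G.

Lemma otherX u v : u \in X -> sadj G u v -> v \notin X.
Proof. by move=> hu h; move: (HB h) hu; case: (u \in X); case: (v \in X). Qed.

Lemma otherY u v : u \notin X -> sadj G u v -> v \in X.
Proof. by move=> hu h; move: (HB h) hu; case: (u \in X); case: (v \in X). Qed.

Lemma neXY u v : u \in X -> v \notin X -> u != v.
Proof. by move=> hu hv; apply/eqP=> e; move: hv; rewrite -e hu. Qed.

Lemma comparable x x' : x \in X -> x' \in X ->
  Nbhd G x \subset Nbhd G x' \/ Nbhd G x' \subset Nbhd G x.
Proof.
move=> hx hx'.
case: (boolP (Nbhd G x \subset Nbhd G x')) => [|/subsetPn [y hy hny]]; first by left.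
right; apply/subsetP => y' hy'; apply/negPn/negP => hny'; apply: HN.
rewrite !inE in hy hny hy' hny'.
have hyX := otherX hx hy. have hy'X := otherX hx' hy'.
exists x, y, x', y'; split => //.
- rewrite /= !inE !negb_or (neXY hx hyX) (neXY hx hy'X) (neXY hx' hy'X).
  rewrite [y == x']eq_sym (neXY hx' hyX) /= ?andbT.
  apply/andP; split; apply/eqP=> e.
    by move: hny; rewrite -e hy.
  by move: hny'; rewrite -e hy.
- rewrite (nadjX HB hx hx') (negbTE hny') (sadjC HG) (negbTE hny).
  by rewrite (nadjY HB hyX hy'X).
Qed.

Variables (xi xj xk yl yr : T).
Hypotheses (hxi : xi \in X) (hxj : xj \in X) (hxk : xk \in X)
  (uxs : uniq [:: xi; xj; xk]) (hyr : yr \notin X)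
  (Hil : sadj G xi yl) (Hjl : sadj G xj yl) (Hir : sadj G xi yr) (Hjr : sadj G xj yr)
  (Hkr : sadj G xk yr) (Hkl : ~~ sadj G xk yl) (Nir : sneg G xi yr) (Njr : sneg G xj yr)
  (Hns : forall u v, sadj G u v -> ~ signed_simplicial G X u v).

Definition minimal m := [/\ m \in X, sadj G m yr &
  forall w, w \in X -> sadj G w yr -> Nbhd G m \subset Nbhd G w].

Lemma exists_min : exists m, minimal m.
Proof.
pose P n := [exists m, [&& m \in X, sadj G m yr & #|Nbhd G m| == n]].
have : exists n, P n by exists #|Nbhd G xk|; apply/existsP; exists xk; rewrite hxk Hkr eqxx.
case/ex_minnP => n /existsP [m /and3P [hm hmr /eqP hn]] hmin.
exists m; split => // w hw hwr.
case: (comparable hm hw) => // hwm.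
have : n <= #|Nbhd G w| by apply: hmin; apply/existsP; exists w; rewrite hw hwr eqxx.
move=> hle.
have /eqP -> // : Nbhd G w == Nbhd G m by rewrite eqEcard hwm hn hle.
Qed.

Lemma min_nl m : minimal m -> ~~ sadj G m yl.
Proof.
case=> _ _ h; apply/negP=> hml.
have := subsetP (h xk hxk Hkr) yl; rewrite !inE hml => /(_ isT).
by rewrite (negbTE Hkl).
Qed.

Lemma step m : minimal m ->
  (exists H : sgraph 'I_6, in_family adjF5 negF5 H /\ contains_induced G H) \/
  exists u v, [/\ u \in X, sadj G u yr, u != m, Nbhd G u \subset Nbhd G m &
                  [/\ sadj G m v, v != yr, sadj G u v & sneg G u v]].
Proof.
move=> hmin; have [hm hmr hsub] := hmin.
have hml := min_nl hmin.
have := Hns hmr; rewrite /signed_simplicial /positive_biclique.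
set S := Nedge G m yr.
have memS a : (a \in S) = [&& a != m, a != yr & (sadj G m a || sadj G yr a)].
  by rewrite /S /Nedge !inE negb_or -andbA.
have SX a : a \in S -> a \in X -> a != m /\ sadj G yr a.
  rewrite memS => /and3P [h1 _ /orP [h|h]] ha //.
  by move: (otherX hm h); rewrite ha.
have SY a : a \in S -> a \notin X -> a != yr /\ sadj G m a.
  rewrite memS => /and3P [_ h1 /orP [h|h]] ha //.
  by move: (otherY hyr h); rewrite (negbTE ha).
case: (classic (exists a b, [/\ a \in S, b \in S, sadj G a b & sneg G a b])); last first.
  move=> hno; case; split => //; split.
    move=> a b ha hb haX hbX; have [_ hra] := SX a ha haX; have [_ hmb] := SY b hb hbX.
    have hra' : sadj G a yr by rewrite (sadjC HG).
    have := subsetP (hsub a haX hra') b.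
    by rewrite !inE => /(_ hmb).
  by move=> a b ha hb hab; apply/negP=> hn; apply: hno; exists a, b.
move=> [a [b [ha hb hab hn]]] _.
have [u [v [hu hv huX huv hnuv]]] : exists u v,
    [/\ u \in S, v \in S, u \in X, sadj G u v & sneg G u v].
  case: (boolP (a \in X)) => haX; first by exists a, b.
  exists b, a; split => //; first exact: otherY haX hab.
    by rewrite (sadjC HG).
  by case: HG => _ [_ E]; rewrite -E.
have hvX := otherX huX huv.
have [hum hru] := SX u hu huX. have [hvr hmv] := SY v hv hvX.
have hur : sadj G u yr by rewrite (sadjC HG).
case: (boolP (Nbhd G u \subset Nbhd G m)) => hum'.
  by right; exists u, v; split.
left.
have [w [hwX hwl hwr hwn hwu]] : exists w,
    [/\ w \in X, sadj G w yl, sadj G w yr, sneg G w yr & w != u].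
  have hij : xi != xj by move: uxs => /= /andP []; rewrite !inE negb_or => /andP [].
  case: (eqVneq u xi) => [->|hne]; first by exists xj; split => //; rewrite eq_sym.
  by exists xi; split => //; rewrite eq_sym.
have [y [hyu hyw hym]] : exists y, [/\ sadj G u y, sadj G w y & ~~ sadj G m y].
  case: (comparable huX hwX) => hc.
    case/subsetPn: hum' => y; rewrite !inE => hy hny; exists y; split => //.
    by have := subsetP hc y; rewrite !inE => /(_ hy).
  exists yl; split => //.
  by have := subsetP hc yl; rewrite !inE => /(_ hwl).
have hyX := otherX huX hyu.
have hmw : Nbhd G m \subset Nbhd G w := hsub w hwX hwr.
have hwv : sadj G w v by have := subsetP hmw v; rewrite !inE => /(_ hmv).
apply: (getF5 HG HB hm huX hwX hvX hyr hyX) => //.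
- have h1 : m != w by apply/eqP=> e; move: hml; rewrite e hwl.
  by rewrite /= !inE !negb_or eq_sym hum h1 eq_sym hwu.
- have h1 : v != y by apply/eqP => e; move: hym; rewrite -e hmv.
  have h2 : yr != y by apply/eqP => e; move: hym; rewrite -e hmr.
  by rewrite /= !inE !negb_or hvr h1 h2.
Qed.

Lemma main_core :
  (exists H : sgraph 'I_5, in_family adjF2 negF2 H /\ contains_induced G H) \/
  (exists H : sgraph 'I_6, in_family adjF3 negF3 H /\ contains_induced G H) \/
  (exists H : sgraph 'I_6, in_family adjF4 negF4 H /\ contains_induced G H) \/
  (exists H : sgraph 'I_6, in_family adjF5 negF5 H /\ contains_induced G H).
Proof.
have [m hmin] := exists_min.
have [hm hmr hsub] := hmin.
have hml := min_nl hmin.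
case: (step hmin) => [F|[u [v [huX hur hum husub [hmv hvr huv nuv]]]]].
  by right; right; right.
have humin : minimal u.
  split => // w hwX hwr; exact: subset_trans husub (hsub w hwX hwr).
have hul := min_nl humin.
case: (step humin) => [F|[u' [v' [hu'X hu'r hu'u hu'sub [huv' hv'r hu'v' nu'v']]]]].
  by right; right; right.
have hu'l : ~~ sadj G u' yl.
  apply/negP => h; have := subsetP hu'sub yl; rewrite !inE h => /(_ isT).
  by rewrite (negbTE hul).
have hvX := otherX hm hmv. have hv'X := otherX huX huv'.
have adjN a b c : sadj G a b -> Nbhd G a \subset Nbhd G c -> sadj G c b.
  by move=> h s; have := subsetP s b; rewrite !inE => /(_ h).
have hxiv : sadj G xi v := adjN _ _ _ hmv (hsub xi hxi Hir).
have hxjv : sadj G xj v := adjN _ _ _ hmv (hsub xj hxj Hjr).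
have hxiv' : sadj G xi v' := adjN _ _ _ huv' (subset_trans husub (hsub xi hxi Hir)).
have hu'v : sadj G u' v := adjN _ _ _ hmv (hsub u' hu'X hu'r).
have neq a b : sadj G a yl -> ~~ sadj G b yl -> a != b.
  by move=> h1 h2; apply/eqP => e; move: h2; rewrite -e h1.
have hij : xi != xj by move: uxs => /= /andP []; rewrite !inE negb_or => /andP [].
have nsym a b : sadj G a b -> sneg G a b -> sneg G b a.
  by move=> h1 h2; case: HG => _ [_ E]; rewrite -E.
have hsym a b : sadj G a b -> sadj G b a by move=> h; rewrite (sadjC HG).
case: (eqVneq v v') => [ev|hvv].
- subst v'. right; left.
  apply: (@getF3 T G (~: X) yr v xi xj u u' HG (bipC HB)); rewrite ?inE ?negbK //; try by apply: hsym.
  + by rewrite eq_sym.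
  + by rewrite /= !inE !negb_or hij (neq _ _ Hil hul) (neq _ _ Hil hu'l) (neq _ _ Hjl hul) (neq _ _ Hjl hu'l) eq_sym hu'u.
  + exact: nsym.
  + exact: nsym.
  + exact: nsym.
  + exact: nsym.
- right; right; left.
  apply: (getF4 HG HB hxi huX hu'X hyr hvX hv'X) => //.
  + by rewrite /= !inE !negb_or (neq _ _ Hil hul) (neq _ _ Hil hu'l) eq_sym hu'u.
  + by rewrite /= !inE !negb_or eq_sym hvr eq_sym hv'r hvv.
Qed.
End Core.

Theorem lemma3p3 (T : finType) (G : sgraph T) (X : {set T}) (xs ys : seq T)
    (y1 xi xj xk yl yr : T) :
  is_sgraph G -> bipartition G X -> nonseparable G -> no_isolated G ->
  canonical_ordering G X xs ys -> ohead ys = Some y1 ->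
  xi \in X -> xj \in X -> xk \in X -> uniq [:: xi; xj; xk] ->
  yl \in ~: X -> yr \in ~: X -> yl != yr ->
  xi \in Nbhd G y1 -> xj \in Nbhd G y1 ->
  sadj G xi yl -> sadj G xj yl -> sadj G xi yr -> sadj G xj yr ->
  sadj G xk yr -> ~~ sadj G xk yl ->
  sneg G xi yr -> sneg G xj yr ->
  (forall u v, sadj G u v -> ~ signed_simplicial G X u v) ->
  (exists H : sgraph 'I_5, in_family adjF2 negF2 H /\ contains_induced G H) \/
  (exists H : sgraph 'I_6, in_family adjF3 negF3 H /\ contains_induced G H) \/
  (exists H : sgraph 'I_6, in_family adjF4 negF4 H /\ contains_induced G H) \/
  (exists H : sgraph 'I_6, in_family adjF5 negF5 H /\ contains_induced G H).
Proof.
move=> HG HB HN _ _ _ hxi hxj hxk uxs _ hyr _ _ _ Hil Hjl Hir Hjr Hkr Hkl Nir Njr Hns.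
rewrite inE in hyr.
exact: (main_core HG HB HN hxi hxj hxk uxs hyr Hil Hjl Hir Hjr Hkr Hkl Nir Njr Hns).
Qed.
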